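(* Let $r\in\mathbb{N}$ and $w,v\in\mathbb{YF}^r$. Then $$d_r(w,v)=\sum_{l=0}^{h(w,v)} d_1(s(w),s(v),l)\cdot r^{\#v-\#w-e(v[l])}.$$
   Context: Fix $r\in\mathbb{N}$. Words and statistics. Consider finite words over $\{1_1,\dots,1_r,2\}$. A letter $1_i$ is a one with digit value $1$; $2$ is a two with digit value $2$. $|x|$ is the sum of digit values, $\#x$ the number of letters, $e(x)$ the number of ones. The graph $\mathbb{YF}^r$. It is the graded graph on all finite words, graded by $|\cdot|$. From $x$ there is a downward edge to every word obtained by one of two operations: (i) delete the leftmost one; (ii) replace a $2$ lying left of the leftmost one (any $2$ if there are no ones) by $1_i$, with arbitrary $i$. $\mathbb{YF}=\mathbb{YF}^1$ (with $1:=1_1$). The map $s$ replaces every $1_i$ by $1$. Path counts. $d_r(x,y)$ is the number of downward paths $y=y_n\to\dots\to y_m=x$ with $|y_i|=i$. Suffix notation. $h(w,v)$ is the number of letters of the longest common suffix of $w,v$; $1_i\neq1_j$ for $i\ne j$. $x[l]$ is $x$ with its last $l$ letters deleted. The restricted path count $d_1(x,y,l)$. For $x,y\in\mathbb{YF}$ with common suffix $u$ of $l$ letters, $d_1(x,y,l)$ is the number of downward paths $y=y_nu\to\dots\to y_mu=x$ in $\mathbb{YF}$ with $|y_i|=i$ such that the words $y_i$ do not all end with the same letter. *)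

(* Defs.v *)
From mathcomp Require Import all_boot all_order all_algebra.
Set Implicit Arguments. Unset Strict Implicit. Unset Printing Implicit Defensive.

(* Letters of YF^r: [None] is the letter 2, [Some i] (i : 'I_r) is the one 1_i.
   YF = YF^1 (letters option 'I_1). *)
Notation letter r := (option 'I_r).
Notation word r := (seq (letter r)).

Definition is_one (r : nat) (a : letter r) : bool := if a is Some _ then true else false.

Definition digit (r : nat) (a : letter r) : nat := if a is Some _ then 1 else 2.
Definition weight (r : nat) (x : word r) : nat := sumn (map (@digit r) x).
Definition nletters (r : nat) (x : word r) : nat := size x.
Definition nones (r : nat) (x : word r) : nat := count (@is_one r) x.

(* All words reached from x by one downward edge:
   (i) delete the leftmost one (position [find is_one x]);
   (ii) replace a 2 at a position j left of the leftmost one (all letters there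
        are 2's; j ranges over all positions if there are no ones) by 1_i. *)
Definition children (r : nat) (x : word r) : seq (word r) :=
  let k := find (@is_one r) x in
  (if has (@is_one r) x then [:: take k x ++ drop k.+1 x] else [::]) ++
  [seq take j x ++ Some i :: drop j.+1 x | j <- iota 0 k, i <- enum 'I_r].

Fixpoint dpaths (r : nat) (k : nat) (y : word r) : seq (seq (word r)) :=
  match k with
  | 0 => [:: [:: y]]
  | k'.+1 => flatten [seq [seq y :: p | p <- dpaths k' z] | z <- children y]
  end.

(* d_r(x,y): number of downward paths y = y_n -> ... -> y_m = x with |y_i| = i.
   Every edge lowers the weight by exactly 1, so these are the paths with
   |y| - |x| steps ending at x. *)
Definition dr (r : nat) (x y : word r) : nat :=
  count (fun p => last y p == x) (dpaths (weight y - weight x) y).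

Definition sYF (r : nat) (x : word r) : word 1 :=
  map (fun a : letter r => if a is Some _ then Some (ord0 : 'I_1) else None) x.

Fixpoint lcp (T : eqType) (s t : seq T) : nat :=
  match s, t with
  | a :: s', b :: t' => if a == b then (lcp s' t').+1 else 0
  | _, _ => 0
  end.
Definition h (r : nat) (w v : word r) : nat := lcp (rev w) (rev v).

Definition cut (r : nat) (x : word r) (l : nat) : word r := take (size x - l) x.

Definition ends_with (r : nat) (a : letter r) (s : word r) : bool :=
  (0 < size s) && (last a s == a).

(* d_1(x,y,l): u = the last l letters of x; number of downward paths in YF
   y = y_n u -> ... -> y_m u = x (|y_i u| graded as above, every word of the
   path ends with u) such that the words y_i do not all end with the same letter. *)
Definition d1 (x y : word 1) (l : nat) : nat :=
  let u := drop (size x - l) x in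
  count (fun p =>
    [&& last y p == x,
        all (fun z => (l <= size z) && (drop (size z - l) z == u)) p &
        ~~ [exists a : letter 1, all (fun z => ends_with a (cut z l)) p]])
    (dpaths (weight y - weight x) y).

(* Main.v *)
Require Import Defs.
From mathcomp Require Import all_boot all_order all_algebra zify.
Import GRing.Theory Num.Theory.
Local Open Scope ring_scope.
Set Implicit Arguments. Unset Strict Implicit.

Section Lcp.
Variable T : eqType.
Implicit Types s t : seq T.

Lemma leq_lcp s t l :
  (l <= lcp s t)%N = [&& (l <= size s)%N, (l <= size t)%N & take l s == take l t].
Proof.
elim: s t l => [|a s IH] [|b t] [|l] //=.
- by rewrite andbF.
case: eqP => [->|ne] /=; first by rewrite ltnS IH eqseq_cons eqxx.
by rewrite eqseq_cons (introF eqP ne) !andbF.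
Qed.

Lemma lcp_nth s t l d : (l <= lcp s t)%N ->
  (l < lcp s t)%N = [&& (l < size s)%N, (l < size t)%N & nth d s l == nth d t l].
Proof.
elim: s t l => [|a s IH] [|b t] [|l] //=; case: eqP => //= _; rewrite ?ltnS; exact: IH.
Qed.

Lemma lcpss s : lcp s s = size s.
Proof. by elim: s => //= a s ->; rewrite eqxx. Qed.

Lemma lcpC s t : lcp s t = lcp t s.
Proof. by elim: s t => [|a s IH] [|b t] //=; rewrite eq_sym IH. Qed.

Lemma lcp_trans l s t u : (l <= lcp t u)%N -> (l <= lcp s u)%N = (l <= lcp s t)%N.
Proof.
rewrite !leq_lcp => /and3P[lt lu /eqP e].
by rewrite e lu lt.
Qed.

End Lcp.

Section Suf.
Variable T : eqType.
Implicit Types s t x y z : seq T.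

Definition lcs s t := lcp (rev s) (rev t).

Fixpoint mm (P : seq (seq T)) : nat :=
  match P with
  | [::] => 0%N
  | y :: P' => if P' is z :: _ then minn (lcs y z) (mm P') else size y
  end.

Lemma lcsss s : lcs s s = size s.
Proof. by rewrite /lcs lcpss size_rev. Qed.

Lemma mm_all P y l :
  (l <= mm (y :: P))%N = all (fun z => l <= lcs z (last y P))%N (y :: P).
Proof.
elim: P y => [|z P IH] y /=; first by rewrite lcsss andbT.
rewrite leq_min IH /=.
case H: (l <= lcs z (last z P))%N; last by rewrite !andbF.
rewrite /=; case: (all _ P); rewrite ?andbF ?andbT //.
by rewrite /lcs (@lcp_trans T l (rev y) _ _ H).
Qed.


End Suf.

Lemma suf_lcs (T : eqType) (z x : seq T) l :
  (l <= size z)%N && (drop (size z - l) z == drop (size x - l) x) = (l <= lcs z x)%N.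
Proof.
rewrite /lcs leq_lcp !size_rev !take_rev (inj_eq (can_inj (@revK T))).
case: (leqP l (size z)) => //= lz.
case: (leqP l (size x)) => //= lx.
apply/negP => /eqP e.
have := congr1 size e; rewrite !size_drop. lia.
Qed.

Lemma ends_cut r (a : letter r) (z : word r) l :
  ends_with a (cut z l) = (l < size z)%N && (nth a (rev z) l == a).
Proof.
rewrite /ends_with /cut size_takel ?leq_subr //.
case: (ltnP l (size z)) => lz.
  rewrite subn_gt0 lz /= -nth_last size_takel ?leq_subr //.
  rewrite nth_take; last by rewrite prednK ?subn_gt0 // ltnSn.
  by rewrite nth_rev // subnS.
have -> : (size z - l = 0)%N by apply/eqP; rewrite subn_eq0.
by [].
Qed.

Lemma exists_ends (y : word 1) P l :
  (l <= mm (y :: P))%N ->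
  [exists a : letter 1, all (fun z => ends_with a (cut z l)) (y :: P)] = (l < mm (y :: P))%N.
Proof.
rewrite !mm_all => /allP Hl.
set x := last y P.
have xP : x \in y :: P by exact: mem_last.
apply/existsP/allP.
- move=> [a /allP Ha] z zP.
  have := Ha z zP; have := Ha x xP; rewrite !ends_cut => /andP[lx /eqP ex] /andP[lz /eqP ez].
  rewrite (@lcp_nth _ _ _ _ a (Hl z zP)) !size_rev lz lx /=.
  by rewrite ex ez.
- move=> H; exists (nth None (rev x) l); apply/allP => z zP.
  have := H z zP; rewrite (@lcp_nth _ _ _ _ None (Hl z zP)) !size_rev => /and3P[lz lx /eqP e].
  rewrite ends_cut lz /= -e; apply/eqP; apply: set_nth_default; by rewrite size_rev.
Qed.

Lemma dpaths_head r k (y : word r) p : p \in dpaths k y -> exists P, p = y :: P.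
Proof.
case: k => [|k] /=; first by rewrite inE => /eqP ->; exists [::].
case/flattenP => s /mapP [z _ ->] /mapP [p' _ ->]; by exists p'.
Qed.

Lemma d1E x y l :
  d1 x y l = count (fun p => (last y p == x) && (mm p == l)) (dpaths (weight y - weight x) y).
Proof.
rewrite /d1; apply: eq_in_count => p /dpaths_head [P ->].
rewrite last_cons; case: eqP => // <-; rewrite !andTb.
have -> : all (fun z => (l <= size z)%N && (drop (size z - l) z == drop (size (last y P) - l) (last y P))) (y :: P)
   = (l <= mm (y :: P))%N.
  by rewrite mm_all; apply: eq_all => z; rewrite suf_lcs.
case: (leqP l (mm (y :: P))) => H; rewrite ?andTb ?andFb.
  rewrite exists_ends //; case: ltngtP H => //.
by apply/esym/eqP => E; move: H; rewrite E ltnn.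
Qed.

Definition sig r (a : letter r) : letter 1 := if a is Some _ then Some ord0 else None.

Lemma sYFE r (x : word r) : sYF x = map (@sig r) x.
Proof. by []. Qed.

Lemma take_cat_le (T : Type) n (s1 s2 : seq T) : (n <= size s1)%N -> take n (s1 ++ s2) = take n s1.
Proof.
move=> H; rewrite take_cat; case: ltnP => // H2.
have -> : n = size s1 by apply/eqP; rewrite eqn_leq H H2.
by rewrite subnn take0 cats0 take_size.
Qed.

Lemma drop_cat_le (T : Type) n (s1 s2 : seq T) : (n <= size s1)%N -> drop n (s1 ++ s2) = drop n s1 ++ s2.
Proof.
move=> H; rewrite drop_cat; case: ltnP => // H2.
have -> : n = size s1 by apply/eqP; rewrite eqn_leq H H2.
by rewrite subnn drop0 drop_size.
Qed.

Lemma lcp_catl (T : eqType) (a s t : seq T) : lcp (a ++ s) (a ++ t) = (size a + lcp s t)%N.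
Proof. by elim: a => //= x a ->; rewrite eqxx. Qed.

Lemma map_sig_nseq r (s : word r) n :
  map (@sig r) s = nseq n None -> s = nseq n None.
Proof.
elim: s n => [|a s IH] [|n] //= [].
by case: a => // _ /IH ->.
Qed.

Definition G r (V W : word r) (m : nat) : rat :=
  if (m <= lcp W V)%N then
    (r%:R : rat) ^ ((size V)%:Z - (size W)%:Z - (count (@is_one r) (drop m V))%:Z)
  else 0.

Lemma split_at (T : Type) (d : T) (s : seq T) n : (n < size s)%N ->
  s = take n s ++ nth d s n :: drop n.+1 s.
Proof. by move=> H; rewrite -drop_nth // cat_take_drop. Qed.

Lemma sum_enum_const r (K : rat) : \sum_(i <- enum 'I_r) K = r%:R * K.
Proof. by rewrite big_enum sumr_const card_ord mulr_natl. Qed.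

Lemma sum_enum_eq r (K : rat) (i0 : 'I_r) :
  \sum_(i <- enum 'I_r) (if i0 == i then K else 0) = K.
Proof.
rewrite big_enum (bigD1 i0) //= eqxx big1 ?addr0 // => i /negbTE.
by rewrite eq_sym => ->.
Qed.

Lemma take_cat_gt (T : Type) m (A : seq T) a s : (size A < m)%N ->
  take m (A ++ a :: s) = A ++ a :: take (m - size A).-1 s.
Proof.
move=> H; rewrite take_cat ltnNge (ltnW H) /=.
by rewrite -[(m - size A)%N]prednK ?subn_gt0.
Qed.

Lemma drop_cat_gt (T : Type) m (A : seq T) a s : (size A < m)%N ->
  drop m (A ++ a :: s) = drop (m - size A).-1 s.
Proof.
move=> H; rewrite drop_cat ltnNge (ltnW H) /=.
by rewrite -[(m - size A)%N]prednK ?subn_gt0.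
Qed.

Lemma sum_enum1 (F : 'I_1 -> rat) : \sum_(i <- enum 'I_1) F i = F ord0.
Proof. by rewrite big_enum /= big_ord1. Qed.

Lemma runit r : (0 < r)%N -> (r%:R : rat) \is a GRing.unit.
Proof. by move=> hr; rewrite unitfE pnatr_eq0 -lt0n. Qed.

Lemma create_rev r (hr : (0 < r)%N) (R W : word r) j m (i1 : 'I_r) :
  (m <= lcp (map (@sig r) W) (map (@sig r) (R ++ Some i1 :: nseq j None)))%N ->
  \sum_(i <- enum 'I_r) G (R ++ Some i :: nseq j None) W m
    = G (R ++ None :: nseq j None) W (minn (size R) m).
Proof.
move=> Hm; case: (leqP m (size R)) => HmR.
  idtac.
  have Hc a : (m <= lcp W (R ++ a :: nseq j None))%N = (m <= lcp W (R ++ None :: nseq j None))%N.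
    by rewrite !leq_lcp !take_cat_le // !size_cat.
  rewrite /G; under eq_bigr => i _ do rewrite Hc.
  case: ifP => Hl; last by rewrite sum_enum_const mulr0.
  under eq_bigr => i _ do rewrite drop_cat_le // count_cat /= count_nseq /= !size_cat /=.
  rewrite sum_enum_const drop_cat_le // count_cat /= count_nseq /=.
  rewrite -[X in X * _]expr1z -exprzDr ?runit //; congr (_ ^ _); rewrite !size_cat /= size_nseq !mul0n; lia.
move: Hm; rewrite leq_lcp !size_map => /and3P [HmW HmZ /eqP Ht].
have HRW : (size R < size W)%N by apply: leq_trans HmW.
set W1 := take (size R) W; set x := nth None W (size R); set W2 := drop (size R).+1 W.
have EW : W = W1 ++ x :: W2 := split_at None HRW.
have sW1 : size W1 = size R by rewrite size_takel // ltnW.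
set q := (m - size R).-1.
have HmW1 : (size W1 < m)%N by rewrite sW1.
have HmR' : (size (map (@sig r) R) < m)%N by rewrite size_map.
have HmW1' : (size (map (@sig r) W1) < m)%N by rewrite size_map.
move: Ht; rewrite {1}EW !map_cat /= (take_cat_gt _ _ HmW1') (take_cat_gt _ _ HmR') !size_map sW1 -/q.
move/eqP; rewrite eqseq_cat ?size_map // eqseq_cons => /and3P [_ /eqP Hx /eqP HN].
have Hqj : (q <= j)%N by rewrite /q; move: HmZ; rewrite size_cat /= size_nseq; lia.
rewrite -!map_take (take_nseq _ Hqj) in HN.
have Hmn n : map (@sig r) (nseq n None) = nseq n None by elim: n => //= n ->.
rewrite Hmn in HN.
have {}HN := map_sig_nseq HN.
case: x EW Hx => [i0|] // EW _.
have HZ a : (m <= size (R ++ a :: nseq j None))%N by move: HmZ; rewrite !size_cat.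
have Hs i : (Some i0 == Some i :> letter r) = (i0 == i) by apply/eqP/eqP => [[]|->].
have Hi i : G (R ++ Some i :: nseq j None) W m =
   if (W1 == R) && (i0 == i) then (r%:R : rat) ^ ((size (R ++ Some i1 :: nseq j None))%:Z - (size W)%:Z - 0%:Z) else 0.
  rewrite /G leq_lcp HmW HZ /=.
  rewrite {1}EW (take_cat_gt _ _ HmW1) (take_cat_gt _ _ HmR) sW1 -/q.
  rewrite eqseq_cat // eqseq_cons HN (take_nseq _ Hqj) eqxx andbT Hs.
  rewrite (drop_cat_gt _ _ HmR) drop_nseq count_nseq mul0n.
  by rewrite !size_cat.
under eq_bigr => i _ do rewrite Hi.
have HRV : (size R <= size (R ++ None :: nseq j None))%N by rewrite size_cat leq_addr.
rewrite /G leq_lcp (ltnW HRW) HRV take_cat_le // take_size drop_size_cat //= count_nseq mul0n.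
rewrite -/W1.
case: (W1 == R) => /=; last by rewrite sum_enum_const mulr0.
have -> : (size (R ++ None :: nseq j None)) = (size (R ++ Some i1 :: nseq j None)) by rewrite !size_cat.
by rewrite (sum_enum_eq _ i0).
Qed.

Lemma delete_rev r (R W : word r) j m (a : 'I_r) :
  (m <= lcp (map (@sig r) W) (map (@sig r) (R ++ nseq j None)))%N ->
  G (R ++ nseq j None) W m = G (R ++ Some a :: nseq j None) W (minn (size R) m).
Proof.
have Hmn n : map (@sig r) (nseq n None) = nseq n None by elim: n => //= n ->.
move=> Hm; case: (leqP m (size R)) => HmR.
  have H1 s : (m <= size (R ++ s))%N by rewrite size_cat (leq_trans HmR) ?leq_addr.
  rewrite /G !leq_lcp !H1 !take_cat_le //.
  case: ifP => // _.
  rewrite !drop_cat_le // !count_cat /= !count_nseq !mul0n.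
  congr (_ ^ _); rewrite !size_cat /= size_nseq; lia.
move: Hm; rewrite leq_lcp !size_map => /and3P [HmW HmZ /eqP Ht].
have HRW : (size R <= size W)%N by apply: leq_trans HmW; apply: ltnW.
set W1 := take (size R) W; set W2 := drop (size R) W.
have EW : W = W1 ++ W2 by rewrite cat_take_drop.
have sW1 : size W1 = size R by rewrite size_takel.
set q := (m - size R)%N.
have Hqj : (q <= j)%N by rewrite /q; move: HmZ; rewrite size_cat size_nseq; lia.
move: Ht; rewrite {1}EW !map_cat !take_cat !size_map sW1 ltnNge (ltnW HmR) /= -/q.
rewrite Hmn (take_nseq _ Hqj).
move/eqP; rewrite eqseq_cat ?size_map // => /andP [_ /eqP HN].
rewrite -map_take in HN.
have {}HN := map_sig_nseq HN.
have HRV : (size R <= size (R ++ Some a :: nseq j None))%N by rewrite size_cat leq_addr.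
rewrite /G !leq_lcp HmW HmZ HRW HRV (@take_cat_le _ (size R) R _ (leqnn _)) take_size -/W1 /=.
rewrite {1}EW !take_cat sW1 ltnNge (ltnW HmR) /= -/q HN (take_nseq _ Hqj) eqseq_cat // eqxx andbT.
case: (W1 == R) => //.
rewrite (@drop_size_cat _ (size R) R) // drop_cat ltnNge (ltnW HmR) /= -/q drop_nseq /= !count_nseq !mul0n.
congr (_ ^ _); rewrite !size_cat /= size_nseq. lia.
Qed.

Lemma last_head r k (y : word r) P d : P \in dpaths k y -> last d P = last y P.
Proof. by case/dpaths_head => P' ->. Qed.

Lemma mm_cons k (y x : word 1) P : P \in dpaths k y -> mm (x :: P) = minn (lcs x y) (mm P).
Proof. by case/dpaths_head => P' ->. Qed.

Lemma mm_bound k (y x : word 1) P : P \in dpaths k y -> last y P = x ->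
  (mm P <= lcp (rev x) (rev y))%N.
Proof.
case/dpaths_head => P' -> /= <-.
have := leqnn (mm (y :: P')); rewrite mm_all /= => /andP[H _].
by rewrite lcpC.
Qed.

Lemma take_find_none r (v : word r) j : (j <= find (@is_one r) v)%N -> take j v = nseq j None.
Proof.
elim: v j => [|a v IH] [|j] //=.
by case: a => [?|] //= /IH ->.
Qed.

Lemma count_sumR (T : Type) (a : pred T) (s : seq T) :
  ((count a s)%:R : rat) = \sum_(x <- s) ((a x)%:R : rat).
Proof. by elim: s => [|x s IH]; rewrite ?big_nil ?big_cons //= natrD IH. Qed.

Lemma rev_split (T : Type) (s : seq T) j a :
  rev (take j s ++ a :: drop j.+1 s) = rev (drop j.+1 s) ++ a :: rev (take j s).
Proof. by rewrite rev_cat rev_cons cat_rcons. Qed.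

Lemma main_ind r (hr : (0 < r)%N) k (v w : word r) :
  ((count (fun p => last v p == w) (dpaths k v))%:R : rat) =
  \sum_(P <- dpaths k (sYF v)) ((last (sYF v) P == sYF w)%:R * G (rev v) (rev w) (mm P)).
Proof.
elim: k v => [|k IH] v.
  rewrite /= big_seq1 /= addn0 size_map.
  case: (eqVneq v w) => [<-|ne].
    rewrite eqxx /G lcpss size_rev leqnn drop_oversize ?size_rev // subrr mul1r.
    by rewrite /= subr0 expr0z.
  case: eqP => [E|_]; last by rewrite mul0r.
  have sz : size v = size w by move: (congr1 size E); rewrite !sYFE !size_map.
  rewrite /G leq_lcp !size_rev sz leqnn /= !take_oversize ?size_rev ?sz //.
  by rewrite (inj_eq (can_inj (@revK _))) eq_sym (negbTE ne) mulr0.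
transitivity (\sum_(z <- children v) \sum_(P <- dpaths k (sYF z))
     ((last (sYF z) P == sYF w)%:R * G (rev z) (rev w) (mm P))).
  rewrite count_sumR /= big_flatten big_map; apply: eq_bigr => z _.
  rewrite big_map -IH count_sumR; apply: eq_big_seq => p pin.
  by rewrite last_cons (last_head v pin).
rewrite /= big_flatten big_map.
under [in RHS]eq_bigr => z' _ do rewrite big_map.
have Hhas : has (@is_one 1) (sYF v) = has (@is_one r) v by rewrite sYFE has_map; apply: eq_has => -[].
have Hfind : find (@is_one 1) (sYF v) = find (@is_one r) v by rewrite sYFE find_map; apply: eq_find => -[].
rewrite /children Hhas Hfind !big_cat.
set K := find (@is_one r) v.
have Hmap j a : sYF (take j v ++ a :: drop j.+1 v) = take j (sYF v) ++ sig a :: drop j.+1 (sYF v).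
  by rewrite !sYFE map_cat /= map_take map_drop.
congr (_ + _).
  case: ifP => Hh; last by rewrite !big_nil.
  rewrite !big_seq1.
  have HK : (K < size v)%N by rewrite -has_find.
  have Ha : is_one (nth None v K) by apply: nth_find.
  case Ea : (nth None v K) Ha => [a|] // _.
  set R := rev (drop K.+1 v).
  have Ev : rev v = R ++ Some a :: nseq K None.
    by rewrite {1}(split_at None HK) rev_split Ea take_find_none // rev_nseq.
  have Ez : rev (take K v ++ drop K.+1 v) = R ++ nseq K None.
    by rewrite rev_cat take_find_none // rev_nseq.
  have Hz : sYF (take K v ++ drop K.+1 v) = take K (sYF v) ++ drop K.+1 (sYF v).
    by rewrite !sYFE map_cat map_take map_drop.
  rewrite Hz; apply: eq_big_seq => P Pin.
  rewrite last_cons (last_head _ Pin) (mm_cons _ Pin).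
  case: eqP => HL; last by rewrite !mul0r.
  congr (_ * _).
  have Hb := mm_bound Pin HL.
  rewrite -Hz /lcs -!map_rev -!sYFE in Hb *.
  rewrite Ez Ev in Hb *.
  have H0 n : lcp (map (@sig r) (Some a :: nseq n None)) (map (@sig r) (nseq n None)) = 0%N by case: n.
  rewrite !sYFE !map_cat lcp_catl H0 addn0 size_map.
  exact: delete_rev.
rewrite !big_flatten !big_map.
apply: eq_big_seq => j; rewrite mem_iota add0n => /andP[_ HjK].
rewrite !big_map.
rewrite -!enumT sum_enum1.
have Hmap2 (i : 'I_r) : sYF (take j v ++ Some i :: drop j.+1 v) = take j (sYF v) ++ Some ord0 :: drop j.+1 (sYF v) := Hmap j (Some i).
under eq_bigr => i _ do rewrite Hmap2.
rewrite exchange_big; apply: eq_big_seq => P Pin.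
rewrite -mulr_sumr last_cons (last_head _ Pin) (mm_cons _ Pin).
case: eqP => HL; last by rewrite !mul0r.
congr (_ * _).
have Hb := mm_bound Pin HL.
have HjS : (j < size v)%N by apply: leq_trans HjK (find_size _ _).
have Hnj : nth None v j = None.
  by have := before_find None HjK; case: (nth None v j).
set R := rev (drop j.+1 v).
have Ev : rev v = R ++ None :: nseq j None.
  by rewrite {1}(split_at None HjS) rev_split Hnj take_find_none ?(ltnW HjK) // rev_nseq.
have Ez i : rev (take j v ++ Some i :: drop j.+1 v) = R ++ Some i :: nseq j None.
  by rewrite rev_split take_find_none ?(ltnW HjK) // rev_nseq.
under eq_bigr => i _ do rewrite Ez.
rewrite -(Hmap2 (Ordinal hr)) /lcs -!map_rev -!sYFE in Hb *.
rewrite Ez Ev in Hb *.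
rewrite !sYFE !map_cat lcp_catl addn0 size_map.
have := create_rev hr Hb; rewrite !enumT; exact: id.
Qed.

Lemma weight_sYF r (x : word r) : weight (sYF x) = weight x.
Proof. by elim: x => //= a x IH; rewrite /weight /= -/(weight _) IH; case: a. Qed.

Lemma sum_nat_pick (x n : nat) (c : nat -> rat) :
  \sum_(0 <= l < n) ((x == l)%:R * c l) = (x < n)%:R * c x.
Proof.
elim: n => [|n IH]; first by rewrite big_nil ltn0 mul0r.
rewrite big_nat_recr //= IH.
have [H|H|->] := ltngtP x n.
- by rewrite ltnS (ltnW H) mul0r addr0.
- by rewrite ltnS leqNgt H !mul0r addr0.
- by rewrite ltnSn mul0r add0r.
Qed.

Unset Implicit Arguments.
Theorem mainTheorem6 (r : nat) (hr : (0 < r)%N) (w v : word r) :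
  ((dr w v)%:R : rat) =
  \sum_(0 <= l < (h w v).+1)
     (d1 (sYF w) (sYF v) l)%:R *
     (r%:R : rat) ^ ((nletters v)%:Z - (nletters w)%:Z - (nones (cut v l))%:Z).
Proof.
rewrite /dr main_ind //.
under [in RHS]eq_bigr => l _ do rewrite d1E !weight_sYF count_sumR mulr_suml.
rewrite exchange_big; apply: eq_bigr => P _.
case: (last (sYF v) P == sYF w) => /=.
  rewrite mul1r sum_nat_pick ltnS /G /h /nletters.
  case: ifP => _; last by rewrite mul0r.
  by rewrite mul1r !size_rev drop_rev count_rev.
by rewrite mul0r big1 // => l _; rewrite mul0r.
Qed.
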